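(* Let $p>3$ be a prime and $f:V_n^{(p)}\to\mathbb{F}_p$ a function with $f(0)=0$. If $f(x)=f(-x)$ for all $x\in V_n^{(p)}$ and $\sum_{i\in\mathbb{F}_p^*}i^2N_i(f)=0$ in $\mathbb{F}_p$, where $N_i(f)=\#\{x\in V_n^{(p)}:f(x)=i\}$, then the linear code $\mathcal{C}_f=\{(af(x)+\langle b,x\rangle_n)_{x\in V_n^{(p)}\setminus\{0\}}:a\in\mathbb{F}_p,b\in V_n^{(p)}\}$ is self-orthogonal.
   Context: $V_n^{(p)}$ is an $n$-dimensional $\mathbb{F}_p$-vector space with a non-degenerate symmetric bilinear form $\langle\cdot,\cdot\rangle_n$. A linear code $\mathcal{C}\subseteq\mathbb{F}_p^N$ is self-orthogonal if $\mathcal{C}\subseteq\mathcal{C}^\perp$ with respect to the standard dot product. *)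

(* Defs.v *)
From HB Require Import structures.
From mathcomp Require Import all_boot all_order all_algebra.
Set Implicit Arguments. Unset Strict Implicit. Unset Printing Implicit Defensive.
Import GRing.Theory.
Local Open Scope ring_scope.

(* V_n^{(p)} is modelled as 'rV['F_p]_n with the bilinear form
   <x,y>_B = x B y^T for a symmetric invertible matrix B (every
   n-dim F_p-space with a non-degenerate symmetric form is isometric to one such). *)
Definition bform (p n : nat) (B : 'M['F_p]_n) (x y : 'rV['F_p]_n) : 'F_p :=
  (x *m B *m y^T) 0 0.

Definition nondeg_sym (p n : nat) (B : 'M['F_p]_n) : Prop :=
  B^T = B /\ B \in unitmx.

Definition nzvec (p n : nat) := {x : 'rV['F_p]_n | x != 0}.

Definition Ncount (p n : nat) (f : 'rV['F_p]_n -> 'F_p) (i : 'F_p) : nat :=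
  #|[set x : 'rV['F_p]_n | f x == i]|.

Definition codeword (p n : nat) (B : 'M['F_p]_n) (f : 'rV['F_p]_n -> 'F_p)
  (a : 'F_p) (b : 'rV['F_p]_n) : {ffun nzvec p n -> 'F_p} :=
  [ffun x : nzvec p n => a * f (val x) + bform B b (val x)].

Definition code_Cf (p n : nat) (B : 'M['F_p]_n) (f : 'rV['F_p]_n -> 'F_p)
  : {set {ffun nzvec p n -> 'F_p}} :=
  [set c | [exists ab : 'F_p * 'rV['F_p]_n, c == codeword B f ab.1 ab.2]].

Definition dotp (p : nat) (I : finType) (c d : {ffun I -> 'F_p}) : 'F_p :=
  \sum_(i : I) c i * d i.

Definition self_orthogonal (p : nat) (I : finType) (C : {set {ffun I -> 'F_p}}) : Prop :=
  forall c d, c \in C -> d \in C -> dotp c d = 0.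

(* Main.v *)
Require Import Defs.
From mathcomp Require Import all_boot all_order all_algebra zify ring.
Set Implicit Arguments. Unset Strict Implicit.
Import GRing.Theory.
Local Open Scope ring_scope.

Lemma sum_nz (p n : nat) (G : 'rV['F_p]_n -> 'F_p) : G 0 = 0 ->
  \sum_(y : nzvec p n) G (val y) = \sum_x G x.
Proof.
move=> G0; rewrite (bigD1 0) //= G0 add0r.
have := big_sub (fun x : 'rV['F_p]_n => x != 0) G.
move=> ->. by [].
Qed.

Lemma bformZ (p n : nat) (B : 'M['F_p]_n) b c x : bform B b (c *: x) = c * bform B b x.
Proof. by rewrite /bform linearZ /= -scalemxAr mxE. Qed.

Lemma bform0 (p n : nat) (B : 'M['F_p]_n) b : bform B b 0 = 0.
Proof. by rewrite /bform linear0 mulmx0 mxE. Qed.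

Lemma natFp_neq0 p m : prime p -> (0 < m < p)%N -> (m%:R : 'F_p) != 0.
Proof.
move=> pr /andP[m0 mp]; rewrite -(dvdn_pcharf (pchar_Fp pr)).
by apply/negP => /(dvdn_leq m0); rewrite leqNgt mp.
Qed.

Lemma sumQ (p n : nat) (B : 'M['F_p]_n) b b' : prime p -> (3 < p)%N ->
  \sum_x bform B b x * bform B b' x = 0.
Proof.
move=> pr p3.
have h2 : (2%:R : 'F_p) != 0 by apply: natFp_neq0 => //; rewrite /=; lia.
have h3 : (3%:R : 'F_p) != 0 by apply: natFp_neq0 => //; rewrite /=; lia.
set S := \sum_x _.
have : S = 4%:R * S.
  rewrite {1}/S (reindex_inj (scalerI h2)) /= /S mulr_sumr.
  by apply: eq_bigr => x _; rewrite !bformZ; ring.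
move/eqP; rewrite -subr_eq0 -{1}(mul1r S) -mulrBl mulf_eq0 => /orP[|/eqP//].
have -> : (1 - 4%:R : 'F_p) = - 3%:R by ring.
by rewrite oppr_eq0 (negbTE h3).
Qed.

Lemma sumL (p n : nat) (B : 'M['F_p]_n) (f : 'rV['F_p]_n -> 'F_p) b : prime p -> (3 < p)%N ->
  (forall x, f x = f (- x)) ->
  \sum_x f x * bform B b x = 0.
Proof.
move=> pr p3 fe.
have h2 : (2%:R : 'F_p) != 0 by apply: natFp_neq0 => //; rewrite /=; lia.
set S := \sum_x _.
have : S = - S.
  rewrite {1}/S (reindex_inj (@oppr_inj _)) /= /S -sumrN.
  apply: eq_bigr => x _; rewrite -fe -scaleN1r bformZ; ring.
move/eqP; rewrite -subr_eq0 opprK -mulr2n -mulr_natl mulf_eq0 (negbTE h2) /=.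
by move/eqP.
Qed.

Lemma sumF (p n : nat) (f : 'rV['F_p]_n -> 'F_p) :
  \sum_x f x ^+ 2 = \sum_(i : 'F_p | i != 0) i ^+ 2 * (Ncount f i)%:R.
Proof.
rewrite (partition_big f predT) //= [RHS](eq_bigr (fun i => i ^+ 2 * (Ncount f i)%:R)) //.
rewrite [LHS](bigD1 0) //= [X in X + _]big1 ?add0r; last by move=> x /eqP ->; rewrite expr0n.
apply: eq_bigr => i _.
rewrite (eq_bigr (fun _ => i ^+ 2)); last by move=> x /eqP ->.
rewrite (eq_bigl (fun x => x \in [set x | f x == i])); last by move=> x; rewrite inE.
by rewrite sumr_const mulr_natr.
Qed.

Theorem lemma13 (p n : nat) (B : 'M['F_p]_n) (f : 'rV['F_p]_n -> 'F_p) :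
  prime p -> (3 < p)%N -> nondeg_sym B ->
  f 0 = 0 ->
  (forall x, f x = f (- x)) ->
  \sum_(i : 'F_p | i != 0) i ^+ 2 * (Ncount f i)%:R = 0 ->
  self_orthogonal (code_Cf B f).
Proof.
move=> pr p3 _ f0 fe hN c d.
rewrite !inE => /existsP[[a b] /eqP ->] /existsP[[a' b'] /eqP ->] /=.
rewrite /dotp.
pose G x := a * a' * f x ^+ 2 + a * (f x * bform B b' x) + a' * (f x * bform B b x)
     + bform B b x * bform B b' x.
rewrite (eq_bigr (fun y : nzvec p n => G (val y))); last first.
  by move=> y _; rewrite !ffunE /G; ring.
rewrite sum_nz; last by rewrite /G f0 !bform0; ring.
rewrite /G.
rewrite !big_split /= -!mulr_sumr sumF hN (@sumL p n B f b' pr p3 fe) (@sumL p n B f b pr p3 fe) (@sumQ p n B b b' pr p3).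
ring.
Qed.
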